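(* Let $h>0$, $K>0$ and $g\in C(\mathbb{R}_+,\mathbb{R}_+)$ with $g(0)=0$, $g(K)=K$ and $\liminf_{x\to0+}g(x)/x>1$. Let $p_1,p_2$ satisfy $1<p_1<\liminf_{x\to0+}g(x)/x\le\limsup_{x\to0+}g(x)/x<p_2$, and for $i=1,2$ let $\lambda_i$ be the unique positive real root of $z=-1+p_ie^{-zh}$ (so $0<\lambda_1<\lambda_2$). Then for every nonnegative solution $\psi:\mathbb{R}\to\mathbb{R}_+$ of $x'(t)=-x(t)+g(x(t-h))$ with $\psi(-\infty)=0$ and $\psi(+\infty)=K$ there exist $\tau<0$ and $C_1,C_2>0$ such that $$C_1e^{\lambda_2t}\le\psi(t)\le C_2e^{\lambda_1t}\qquad\text{for all } t\le\tau.$$ *)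

(* Defs.v *)
From Stdlib Require Import Reals.
From Coquelicot Require Import Coquelicot.
Open Scope R_scope.

Definition inf_right0 (f : R -> R) (d : R) : Rbar :=
  Rbar_glb (fun z : Rbar => exists x, 0 < x < d /\ z = Finite (f x)).

Definition sup_right0 (f : R -> R) (d : R) : Rbar :=
  Rbar_lub (fun z : Rbar => exists x, 0 < x < d /\ z = Finite (f x)).

Definition liminf_right0 (f : R -> R) : Rbar :=
  Rbar_lub (fun y : Rbar => exists d, 0 < d /\ y = inf_right0 f d).

Definition limsup_right0 (f : R -> R) : Rbar :=
  Rbar_glb (fun y : Rbar => exists d, 0 < d /\ y = sup_right0 f d).

Definition continuous_on_Rplus (g : R -> R) : Prop :=
  forall x, 0 <= x ->
    filterlim g (within (fun y => 0 <= y) (locally x)) (locally (g x)).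

(* Main.v *)
Require Import Defs.
From Stdlib Require Import Reals Lra Classical.
From Coquelicot Require Import Coquelicot.
Open Scope R_scope.

Lemma lub_ok E : Rbar_is_lub E (Rbar_lub E).
Proof. unfold Rbar_lub; destruct (Rbar_ex_lub E); auto. Qed.
Lemma glb_ok E : Rbar_is_glb E (Rbar_glb E).
Proof. unfold Rbar_glb; destruct (Rbar_ex_glb E); auto. Qed.

Lemma liminf_ex f p : Rbar_lt (Finite p) (liminf_right0 f) ->
  exists d, 0 < d /\ forall x, 0 < x < d -> p < f x.
Proof.
  unfold liminf_right0. intros H. apply NNPP; intro Hn.
  destruct (lub_ok (fun y : Rbar => exists d, 0 < d /\ y = inf_right0 f d)) as [_ Hl].
  assert (Hb : Rbar_le (Rbar_lub (fun y : Rbar => exists d, 0 < d /\ y = inf_right0 f d)) (Finite p)).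
  { apply Hl. intros y [d [Hd ->]]. apply Rbar_not_lt_le. intro Hlt.
    apply Hn. exists d. split; auto. intros x Hx.
    destruct (glb_ok (fun z : Rbar => exists x, 0 < x < d /\ z = Finite (f x))) as [Hlb _].
    assert (Hle := Hlb (Finite (f x)) (ex_intro _ x (conj Hx eq_refl))).
    unfold inf_right0 in Hlt.
    exact (Rbar_lt_le_trans _ _ _ Hlt Hle). }
  exact (Rbar_lt_not_le _ _ H Hb).
Qed.

Lemma limsup_ex f p : Rbar_lt (limsup_right0 f) (Finite p) ->
  exists d, 0 < d /\ forall x, 0 < x < d -> f x < p.
Proof.
  unfold limsup_right0. intros H. apply NNPP; intro Hn.
  destruct (glb_ok (fun y : Rbar => exists d, 0 < d /\ y = sup_right0 f d)) as [_ Hl].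
  assert (Hb : Rbar_le (Finite p) (Rbar_glb (fun y : Rbar => exists d, 0 < d /\ y = sup_right0 f d))).
  { apply Hl. intros y [d [Hd ->]]. apply Rbar_not_lt_le. intro Hlt.
    apply Hn. exists d. split; auto. intros x Hx.
    destruct (lub_ok (fun z : Rbar => exists x, 0 < x < d /\ z = Finite (f x))) as [Hub _].
    assert (Hle := Hub (Finite (f x)) (ex_intro _ x (conj Hx eq_refl))).
    unfold sup_right0 in Hlt.
    exact (Rbar_le_lt_trans _ _ _ Hle Hlt). }
  exact (Rbar_lt_not_le _ _ H Hb).
Qed.

Lemma mono (F F' : R -> R) a b : a <= b ->
  (forall u, a <= u <= b -> is_derive F u (F' u)) ->
  (forall u, a <= u <= b -> 0 <= F' u) -> F a <= F b.
Proof.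
  intros Hab D P. destruct Hab as [Hlt|Heq]; [|subst; lra].
  destruct (MVT_cor2 F F' a b Hlt) as [c [Hc Hc2]].
  - intros c Hc; apply is_derive_Reals; auto.
  - assert (0 <= F' c) by (apply P; lra).
    assert (0 <= F' c * (b - a)) by (apply Rmult_le_pos; lra). lra.
Qed.

Lemma deriv_wexp (w : R -> R) wd c B u : is_derive w u wd ->
  is_derive (fun t => (w t - B) * exp (c*t)) u ((wd + c*(w u - B)) * exp (c*u)).
Proof.
  intros D.
  replace ((wd + c*(w u - B)) * exp (c*u)) with
    ((wd - 0) * exp (c*u) + (w u - B) * (c * exp (c*u))) by ring.
  apply (is_derive_mult (fun t => w t - B) (fun t => exp (c*t))).
  - apply (is_derive_minus w (fun _ => B)); auto. apply is_derive_Reals, derivable_pt_lim_const.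
  - auto_derive; auto. ring.
  - intros; apply Rmult_comm.
Qed.

Lemma gen (w w' : R -> R) (c h T s B : R) : 0 < h ->
 (forall t, t <= T -> is_derive w t (w' t)) ->
 (forall t, t <= T -> B <= w (t-h) -> 0 <= w' t + c*(w t - B)) ->
 (forall u, s <= u <= s+h -> B <= w u) ->
 forall t, s <= t <= T -> B <= w t.
Proof.
 intros hh D H base.
 assert (P: forall n:nat, forall t, s <= t <= s + (INR n + 1)*h -> t <= T -> B <= w t).
 { induction n.
   - intros t Ht _. apply base. simpl in Ht; lra.
   - intros t Ht HtT. rewrite S_INR in Ht. assert (Hn := pos_INR n).
     destruct (Rle_dec t (s + (INR n + 1)*h)) as [Hle|Hgt]. { apply IHn; lra. }
     apply Rnot_le_lt in Hgt. set (a := s + (INR n + 1)*h) in *.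
     assert (Ha: B <= w a) by (apply IHn; [unfold a; split; [nra|lra] | lra]).
     assert (M: (w a - B)*exp(c*a) <= (w t - B)*exp(c*t)).
     { apply (mono (fun t => (w t - B)*exp(c*t)) (fun u => (w' u + c*(w u - B))*exp(c*u))).
       lra.
       intros u Hu; apply deriv_wexp; apply D; lra.
       intros u Hu. apply Rmult_le_pos; [| left; apply exp_pos].
       apply H; [lra|]. apply IHn; unfold a in *; nra. }
     destruct (Rle_dec B (w t)) as [ok|ko]; auto. exfalso.
     assert (e1 := exp_pos (c*t)). assert (e2 := exp_pos (c*a)).
     assert (0 <= (w a - B)*exp(c*a)) by (apply Rmult_le_pos; lra).
     nra. }
 intros t Ht. destruct (INR_unbounded ((T - s)/h)) as [n Hn].
 apply (P n); [|lra]. split; [lra|].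
 assert (T - s < INR n * h).
 { apply (Rmult_lt_compat_r h) in Hn; auto. unfold Rdiv in Hn.
   rewrite Rmult_assoc, Rinv_l in Hn; lra. }
 nra.
Qed.

Lemma gen' (w w' : R -> R) (c h T s B : R) : 0 < h ->
 (forall t, t <= T -> is_derive w t (w' t)) ->
 (forall t, t <= T -> w (t-h) <= B -> w' t + c*(w t - B) <= 0) ->
 (forall u, s <= u <= s+h -> w u <= B) ->
 forall t, s <= t <= T -> w t <= B.
Proof.
 intros hh D H base t Ht.
 assert (G := gen (fun t => - w t) (fun t => - w' t) c h T s (-B) hh).
 assert (-B <= - w t); [|lra].
 apply G; auto.
 - intros t0 Ht0. apply (is_derive_opp w t0 (w' t0)). auto.
 - intros t0 Ht0 Hb. assert (w' t0 + c * (w t0 - B) <= 0) by (apply H; lra). lra.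
 - intros u Hu. assert (w u <= B) by auto. lra.
Qed.

Lemma exp_mono x y : x <= y -> exp x <= exp y.
Proof. intros [H|H]; [left; apply exp_increasing; auto | subst; lra]. Qed.

Lemma expM a b : exp a * exp b = exp (a + b).
Proof. rewrite exp_plus; auto. Qed.

Theorem lemma6 (h K : R) (g : R -> R) (p1 p2 lambda1 lambda2 : R)
  (hh : 0 < h) (hK : 0 < K)
  (hgc : continuous_on_Rplus g)
  (hgpos : forall x, 0 <= x -> 0 <= g x)
  (hg0 : g 0 = 0) (hgK : g K = K)
  (hliminf1 : Rbar_lt (Finite 1) (liminf_right0 (fun x => g x / x)))
  (hp1 : 1 < p1)
  (hp1l : Rbar_lt (Finite p1) (liminf_right0 (fun x => g x / x)))
  (hll : Rbar_le (liminf_right0 (fun x => g x / x))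
                 (limsup_right0 (fun x => g x / x)))
  (hp2 : Rbar_lt (limsup_right0 (fun x => g x / x)) (Finite p2))
  (hl1 : 0 < lambda1) (hl1e : lambda1 = -1 + p1 * exp (- lambda1 * h))
  (hl2 : 0 < lambda2) (hl2e : lambda2 = -1 + p2 * exp (- lambda2 * h)) :
  forall psi : R -> R,
    (forall t, 0 <= psi t) ->
    (forall t, derivable_pt_lim psi t (- psi t + g (psi (t - h)))) ->
    is_lim psi m_infty 0 ->
    is_lim psi p_infty K ->
    exists tau C1 C2, tau < 0 /\ 0 < C1 /\ 0 < C2 /\
      forall t, t <= tau ->
        C1 * exp (lambda2 * t) <= psi t /\ psi t <= C2 * exp (lambda1 * t).
Proof.
  intros psi Hpos Hder Hm Hp.
  assert (D: forall t, is_derive psi t (- psi t + g (psi (t-h)))).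
  { intro; apply is_derive_Reals; auto. }
  destruct (liminf_ex _ _ hp1l) as [d1 [Hd1 G1]].
  destruct (limsup_ex _ _ hp2) as [d2 [Hd2 G2]].
  assert (g1: forall x, 0 <= x < d1 -> p1 * x <= g x).
  { intros x Hx. destruct (Req_dec x 0) as [->|Hx0]. rewrite hg0; lra.
    assert (H := G1 x ltac:(lra)).
    apply (Rmult_lt_compat_r x) in H; [|lra].
    replace (g x / x * x) with (g x) in H by (field; auto). lra. }
  assert (g2: forall x, 0 <= x < d2 -> g x <= p2 * x).
  { intros x Hx. destruct (Req_dec x 0) as [->|Hx0]. rewrite hg0; lra.
    assert (H := G2 x ltac:(lra)).
    apply (Rmult_lt_compat_r x) in H; [|lra].
    replace (g x / x * x) with (g x) in H by (field; auto). lra. }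
  assert (L0: forall s t, s <= t -> psi s * exp (s - t) <= psi t).
  { intros s t Hst.
    assert (M: (psi s - 0) * exp (1*s) <= (psi t - 0) * exp (1*t)).
    { apply (mono (fun t => (psi t - 0) * exp (1*t))
        (fun u => ((- psi u + g (psi (u-h))) + 1*(psi u - 0)) * exp (1*u))); auto.
      intros; apply deriv_wexp; auto.
      intros u _. apply Rmult_le_pos; [|left; apply exp_pos].
      assert (0 <= g (psi (u-h))) by auto. lra. }
    replace (1*s) with ((s - t) + t) in M by ring.
    replace (1*t) with t in M by ring.
    rewrite exp_plus in M. assert (e := exp_pos t).
    apply (Rmult_le_reg_r (exp t)); auto. nra. }
  apply is_lim_spec in Hm.
  assert (hm: 0 < Rmin d1 d2) by (apply Rmin_case; lra).
  destruct (Hm (mkposreal _ hm)) as [M HM]. simpl in HM.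
  assert (small: forall x, x < M -> psi x < d1 /\ psi x < d2).
  { intros x Hx. assert (H := HM x Hx). apply Rabs_def2 in H.
    assert (Rmin d1 d2 <= d1) by apply Rmin_l. assert (Rmin d1 d2 <= d2) by apply Rmin_r. lra. }
  set (T := Rmin M 0 - 1).
  assert (HT1: T < 0) by (unfold T; assert (Rmin M 0 <= 0) by apply Rmin_r; lra).
  assert (HT2: forall t, t <= T -> t - h < M)
    by (intros t Ht; unfold T in Ht; assert (Rmin M 0 <= M) by apply Rmin_l; lra).
  set (w1 := fun t => (psi t - 0) * exp ((-lambda1) * t)).
  assert (UB: forall s0, s0 <= T - h ->
     psi s0 * exp (- lambda1 * s0 - (1+lambda1)*h) <= w1 T).
  { intros s0 Hs0.
    apply (gen w1 (fun t => ((- psi t + g (psi (t-h))) + (-lambda1)*(psi t - 0)) * exp ((-lambda1)*t))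
             (1+lambda1) h T s0); [exact hh| | | |lra].
    - intros t _; apply deriv_wexp; auto.
    - intros t Ht HB. unfold w1 in *.
      set (x := psi (t-h)) in *.
      assert (Hx : 0 <= x < d1) by (split; [apply Hpos| apply small; auto]).
      assert (gx := g1 x Hx).
      assert (E: exp ((-lambda1)*t) = exp (- lambda1 * h) * exp ((-lambda1)*(t-h)))
        by (rewrite expM; f_equal; ring).
      rewrite E.
      assert (e1 := exp_pos (- lambda1 * h)). assert (e2 := exp_pos ((-lambda1)*(t-h))).
      assert (Hp1: p1 * exp (- lambda1 * h) = 1 + lambda1) by lra.
      assert (g x * exp (- lambda1 * h) * exp ((-lambda1)*(t-h)) >=
              (1+lambda1) * (x * exp ((-lambda1)*(t-h)))).
      { rewrite <- Hp1. apply Rle_ge.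
        replace (p1 * exp (- lambda1 * h) * (x * exp ((-lambda1)*(t-h)))) with
          ((p1 * x) * exp (- lambda1 * h) * exp ((-lambda1)*(t-h))) by ring.
        apply Rmult_le_compat_r; [lra|]. apply Rmult_le_compat_r; lra. }
      replace (x - 0) with x in HB by ring.
      nra.
    - intros u Hu. unfold w1.
      assert (H1 := L0 s0 u ltac:(lra)).
      assert (H2: psi s0 * exp (s0 - u) * exp ((-lambda1)*u) <= (psi u - 0) * exp ((-lambda1)*u)).
      { apply Rmult_le_compat_r; [left; apply exp_pos|lra]. }
      eapply Rle_trans; [|exact H2].
      rewrite Rmult_assoc, expM. apply Rmult_le_compat_l; auto.
      apply exp_mono. nra. }
  assert (PT: 0 < psi T).
  { destruct (Hpos T) as [H|H]; auto. exfalso.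
    assert (Z: forall s, s <= T -> psi s = 0).
    { intros s Hs. assert (H1 := L0 s T Hs). assert (e := exp_pos (s - T)).
      assert (0 <= psi s) by auto. rewrite <- H in H1. nra. }
    apply is_lim_spec in Hp.
    assert (hk: 0 < K/2) by lra.
    destruct (Hp (mkposreal _ hk)) as [M' HM']. simpl in HM'.
    set (T' := Rmax (M'+1) T).
    assert (Hc := gen' psi (fun t => - psi t + g (psi (t-h))) 1 h T' (T-h) 0 hh).
    assert (psi T' <= 0).
    { apply Hc.
      - intros; auto.
      - intros t _ Ht. assert (psi (t-h) = 0) by (assert (0 <= psi (t-h)) by auto; lra).
        rewrite H0, hg0. lra.
      - intros u Hu. rewrite Z; lra.
      - split; [|lra]. assert (T <= T') by apply Rmax_r. lra. }
    assert (M'+1 <= T') by apply Rmax_l.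
    assert (Hq := HM' T' ltac:(lra)). apply Rabs_def2 in Hq. lra. }
  set (w2 := fun t => (psi t - 0) * exp ((-lambda2) * t)).
  set (b := w2 T / 2).
  assert (Hb: 0 < b).
  { unfold b, w2. assert (e := exp_pos ((-lambda2)*T)). nra. }
  assert (EX: forall t, t <= T -> exists u, t - h <= u <= t /\ b < w2 u).
  { intros t Ht. apply NNPP; intro Hn.
    assert (Hle: forall u, t - h <= u <= t -> w2 u <= b).
    { intros u Hu. apply Rnot_lt_le; intro Hlt. apply Hn; eauto. }
    assert (w2 T <= b); [|unfold b in *; lra].
    apply (gen' w2 (fun t => ((- psi t + g (psi (t-h))) + (-lambda2)*(psi t - 0)) * exp ((-lambda2)*t))
             (1+lambda2) h T (t-h)); [exact hh| | | intros u Hu; apply Hle; lra |lra].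
    - intros t0 _; apply deriv_wexp; auto.
    - intros t0 Ht0 HB. unfold w2 in HB |- *.
      set (x := psi (t0-h)) in *.
      assert (Hx : 0 <= x < d2) by (split; [apply Hpos| apply small; auto]).
      assert (gx := g2 x Hx).
      assert (E: exp ((-lambda2)*t0) = exp (- lambda2 * h) * exp ((-lambda2)*(t0-h)))
        by (rewrite expM; f_equal; ring).
      rewrite E.
      assert (e1 := exp_pos (- lambda2 * h)). assert (e2 := exp_pos ((-lambda2)*(t0-h))).
      assert (Hp2: p2 * exp (- lambda2 * h) = 1 + lambda2) by lra.
      assert (g x * exp (- lambda2 * h) * exp ((-lambda2)*(t0-h)) <=
              (1+lambda2) * (x * exp ((-lambda2)*(t0-h)))).
      { rewrite <- Hp2.
        replace (p2 * exp (- lambda2 * h) * (x * exp ((-lambda2)*(t0-h)))) with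
          ((p2 * x) * exp (- lambda2 * h) * exp ((-lambda2)*(t0-h))) by ring.
        apply Rmult_le_compat_r; [lra|]. apply Rmult_le_compat_r; lra. }
      replace (x - 0) with x in HB by ring.
      nra. }
  exists (T - h), (b * exp (-(1+lambda2)*h)), (w1 T * exp ((1+lambda1)*h) + 1).
  assert (w1T: 0 <= w1 T).
  { unfold w1. assert (e := exp_pos ((-lambda1)*T)). nra. }
  split; [lra|]. split; [assert (e := exp_pos (-(1+lambda2)*h)); nra|].
  split; [assert (e := exp_pos ((1+lambda1)*h)); nra|].
  intros t Ht. split.
  - destruct (EX t ltac:(lra)) as [u [Hu Hbu]].
    unfold w2 in Hbu.
    assert (H1 := L0 u t ltac:(lra)).
    assert (psi u * exp (u - t) >= b * exp (lambda2 * u) * exp (u - t)).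
    { apply Rle_ge, Rmult_le_compat_r; [left; apply exp_pos|].
      assert (E2: exp ((-lambda2)*u) * exp (lambda2 * u) = 1)
        by (rewrite expM; replace (_ + _) with 0 by ring; apply exp_0).
      assert (e := exp_pos (lambda2*u)).
      replace (psi u - 0) with (psi u) in Hbu by ring.
      apply (Rmult_lt_compat_r (exp (lambda2 * u))) in Hbu; auto.
      rewrite Rmult_assoc, E2, Rmult_1_r in Hbu. lra. }
    rewrite Rmult_assoc, expM in H.
    eapply Rle_trans; [|exact H1]. apply Rge_le in H.
    eapply Rle_trans; [|exact H].
    rewrite Rmult_assoc, expM. apply Rmult_le_compat_l; [lra|].
    apply exp_mono. nra.
  - assert (H := UB t ltac:(lra)).
    assert (E: exp (- lambda1 * t - (1+lambda1)*h) * (exp ((1+lambda1)*h) * exp (lambda1 * t)) = 1)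
      by (rewrite !expM; replace (_ + _) with 0 by ring; apply exp_0).
    assert (e := exp_pos ((1+lambda1)*h)). assert (e' := exp_pos (lambda1*t)).
    assert (e'' := exp_pos (- lambda1 * t - (1+lambda1)*h)).
    apply (Rmult_le_compat_r (exp ((1+lambda1)*h) * exp (lambda1 * t))) in H; [|nra].
    rewrite Rmult_assoc, E in H. nra.
Qed.
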